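(* There exist absolute constants $K,\kappa>0$ such that the following holds. Let $\tilde c>0$ and $\tilde\xi\ge1$. Suppose that, for all $N$, all $m\ge1$, and all $m$-tuples $p,q$ of distinct integers in $[1,2N]$ with $|p-q|_1\ge N/8$, $$\mathbb E\Big[\prod_{a=1}^m|R_{p_a,q_a}|\Big]\le\tilde c^m\exp\big(-|p-q|_1/\tilde\xi\big).$$ Then multi-point dynamical localization holds with constants $C=K\tilde c\tilde\xi^2$ and $\xi=\kappa\tilde\xi$. That is, for all sufficiently large $N$, all $m\ge1$ and all strictly increasing $m$-tuples $p,q$ in $[1,2N]$ with $|p-q|_1\ge N/8$, $$\mathbb E|\det R[p,q]|\le C^me^{-N/\xi}.$$
   Context: $R=R(t)\in SO(2N)$ is a random orthogonal matrix, namely the Heisenberg evolution matrix of the Majorana operators at a fixed time $t$: $e^{iHt}c_pe^{-iHt}=\sum_qR_{p,q}c_q$ for a random quadratic Hamiltonian $H$. For $m$-tuples $p,q$, $|p-q|_1=\sum_{a=1}^m|p_a-q_a|$. For strictly increasing $p,q$, $R[p,q]$ is the $m\times m$ matrix with entries $R[p,q]_{a,b}=R_{p_a,q_b}$. $\mathbb E$ is the expectation over the randomness. *)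

(* Defs.v *)
From HB Require Import structures.
From Stdlib Require Import Reals Lra ClassicalEpsilon FunctionalExtensionality.
From mathcomp Require Import all_boot all_algebra.

Set Implicit Arguments.
Unset Strict Implicit.
Unset Printing Implicit Defensive.

Definition R_eqb (x y : R) : bool := if Req_EM_T x y then true else false.
Lemma R_eqP : Equality.axiom R_eqb.
Proof. move=> x y; rewrite /R_eqb; case: Req_EM_T => h; constructor => //. Qed.
HB.instance Definition _ := hasDecEq.Build R R_eqP.

Definition R_find (P : pred R) (_ : nat) : option R :=
  match excluded_middle_informative (exists x, P x) with
  | left h => Some (proj1_sig (constructive_indefinite_description _ h))
  | right _ => None
  end.
Lemma R_find_correct P n x : R_find P n = Some x -> P x.
Proof.
rewrite /R_find; case: excluded_middle_informative => // h [<-].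
exact: proj2_sig (constructive_indefinite_description _ h).
Qed.
Lemma R_find_complete (P : pred R) : (exists x, P x) -> exists n, R_find P n.
Proof. by move=> h; exists 0%N; rewrite /R_find; case: excluded_middle_informative. Qed.
Lemma R_find_ext (P Q : pred R) : P =1 Q -> R_find P =1 R_find Q.
Proof. by move=> h; have -> : P = Q by apply: functional_extensionality. Qed.
HB.instance Definition _ :=
  hasChoice.Build R R_find_correct R_find_complete R_find_ext.

Lemma R_addA : associative Rplus.
Proof. by move=> x y z; rewrite Rplus_assoc. Qed.
Lemma R_addC : commutative Rplus.
Proof. exact: Rplus_comm. Qed.
Lemma R_add0 : left_id R0 Rplus.
Proof. exact: Rplus_0_l. Qed.
Lemma R_addN : left_inverse R0 Ropp Rplus.
Proof. exact: Rplus_opp_l. Qed.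
HB.instance Definition _ := GRing.isZmodule.Build R R_addA R_addC R_add0 R_addN.

Lemma R_mulA : associative Rmult.
Proof. by move=> x y z; rewrite Rmult_assoc. Qed.
Lemma R_mulC : commutative Rmult.
Proof. exact: Rmult_comm. Qed.
Lemma R_mul1 : left_id R1 Rmult.
Proof. exact: Rmult_1_l. Qed.
Lemma R_mulDl : left_distributive Rmult Rplus.
Proof. exact: Rmult_plus_distr_r. Qed.
Lemma R1_neq0 : R1 != R0.
Proof. by apply/eqP; exact: R1_neq_R0. Qed.
HB.instance Definition _ := GRing.Zmodule_isComNzRing.Build R
  R_mulA R_mulC R_mul1 R_mulDl R1_neq0.

Local Open Scope ring_scope.
Definition is_SO (n : nat) (A : 'M[R]_n) : Prop :=
  A *m A^T = 1%:M /\ \det A = 1.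
Local Close Scope ring_scope.

Local Open Scope R_scope.

(* The expectation is modelled abstractly as a normalized, positive, linear
   functional, required to behave as such on bounded random variables
   (all random variables in the theorem are bounded, |R_{pq}| <= 1). *)
Definition bounded_rv (Omega : Type) (f : Omega -> R) : Prop :=
  exists B : R, forall w, Rabs (f w) <= B.

Record is_expectation (Omega : Type) (E : (Omega -> R) -> R) : Prop := {
  E_add : forall f g, bounded_rv f -> bounded_rv g ->
            E (fun w => f w + g w) = E f + E g;
  E_scale : forall (c : R) f, bounded_rv f -> E (fun w => c * f w) = c * E f;
  E_mono : forall f g, bounded_rv f -> bounded_rv g ->
            (forall w, f w <= g w) -> E f <= E g;
  E_one : E (fun _ => 1) = 1
}.


(* Indices {1,...,2N} are represented 0-based as 'I_(N.*2); this shift does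
   not affect |p-q|_1, monotonicity or distinctness. *)

Definition dist1 (n m : nat) (p q : m.-tuple 'I_n) : R :=
  \big[Rplus/0]_(a < m) Rabs (INR (tnth p a) - INR (tnth q a)).

Definition strictly_increasing (n m : nat) (p : m.-tuple 'I_n) : bool :=
  sorted ltn (map (@nat_of_ord n) p).

Definition subm (n m : nat) (A : 'M[R]_n) (p q : m.-tuple 'I_n) : 'M[R]_m :=
  \matrix_(a < m, b < m) A (tnth p a) (tnth q b).

Definition prod_abs_entries (n m : nat) (A : 'M[R]_n) (p q : m.-tuple 'I_n) : R :=
  \big[Rmult/1]_(a < m) Rabs (A (tnth p a) (tnth q a)).

(* Main.v *)
Require Import Defs.
From HB Require Import structures.
From Stdlib Require Import Reals Lra FunctionalExtensionality.
From mathcomp Require Import all_boot all_algebra all_fingroup zify.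
Open Scope R_scope.
Set Implicit Arguments. Unset Strict Implicit.

Lemma RplusA' : associative Rplus. Proof. by move=> x y z; rewrite Rplus_assoc. Qed.
Lemma RmultA' : associative Rmult. Proof. by move=> x y z; rewrite Rmult_assoc. Qed.
HB.instance Definition _ := Monoid.isComLaw.Build R 0 Rplus RplusA' Rplus_comm Rplus_0_l.
HB.instance Definition _ := Monoid.isComLaw.Build R 1 Rmult RmultA' Rmult_comm Rmult_1_l.
HB.instance Definition _ := Monoid.isMulLaw.Build R 0 Rmult Rmult_0_l Rmult_0_r.
HB.instance Definition _ := Monoid.isAddLaw.Build R Rmult Rplus Rmult_plus_distr_r Rmult_plus_distr_l.

Section B.
Variable I : Type.
Implicit Types (r : seq I) (P : pred I) (F G : I -> R).

Lemma sumR_le r P F G : (forall i, P i -> F i <= G i) ->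
  \big[Rplus/0]_(i <- r | P i) F i <= \big[Rplus/0]_(i <- r | P i) G i.
Proof. move=> h; apply: (big_ind2 (fun x y => x <= y)) => //; [lra|]; move=> *; lra. Qed.

Lemma sumR_ge0 r P F : (forall i, P i -> 0 <= F i) -> 0 <= \big[Rplus/0]_(i <- r | P i) F i.
Proof. move=> h; apply: (big_ind (fun x => 0 <= x)) => //; [lra|]; move=> *; lra. Qed.

Lemma prodR_ge0 r P F : (forall i, P i -> 0 <= F i) -> 0 <= \big[Rmult/1]_(i <- r | P i) F i.
Proof. move=> h; apply: (big_ind (fun x => 0 <= x)) => //; [lra|]; move=> *; nra. Qed.

Lemma prodR_le r P F G : (forall i, P i -> 0 <= F i <= G i) ->
  \big[Rmult/1]_(i <- r | P i) F i <= \big[Rmult/1]_(i <- r | P i) G i.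
Proof.
move=> h.
suff: 0 <= \big[Rmult/1]_(i <- r | P i) F i <= \big[Rmult/1]_(i <- r | P i) G i by case.
apply: (big_ind2 (fun x y => 0 <= x <= y)).
- lra.
- move=> x1 x2 y1 y2 [? ?] [? ?]; split; [nra|]; apply: Rmult_le_compat => //.
- by move=> i /h.
Qed.

Lemma Rabs_sumR r P F : Rabs (\big[Rplus/0]_(i <- r | P i) F i) <= \big[Rplus/0]_(i <- r | P i) Rabs (F i).
Proof.
apply: (big_ind2 (fun x y => Rabs x <= y)); first by rewrite Rabs_R0; lra.
- move=> x1 x2 y1 y2 h1 h2; apply: Rle_trans (Rabs_triang _ _) _; lra.
- move=> *; lra.
Qed.

Lemma Rabs_prodR r P F : Rabs (\big[Rmult/1]_(i <- r | P i) F i) = \big[Rmult/1]_(i <- r | P i) Rabs (F i).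
Proof. apply: big_morph; [exact: Rabs_mult | exact: Rabs_R1]. Qed.
End B.

Lemma sum_sub_uniq (T : finType) (s : seq T) (F : T -> R) : uniq s -> (forall x, 0 <= F x) ->
  \big[Rplus/0]_(x <- s) F x <= \big[Rplus/0]_(x : T) F x.
Proof.
move=> us h; rewrite (big_uniq _ us) [X in _ <= X](bigID (fun x => x \in s)) /=.
have := @sumR_ge0 T (index_enum T) (fun x => true && ~~ (x \in s)) F (fun i _ => h i).
set a := \big[Rplus/0]_(i <- _ | _) _; set b := \big[Rplus/0]_(i <- _ | _) _; lra.
Qed.

Lemma bounded_sum (Omega I : Type) (r : seq I) (F : I -> Omega -> R) :
  (forall i, bounded_rv (F i)) -> bounded_rv (fun w => \big[Rplus/0]_(i <- r) F i w).
Proof.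
move=> h; elim: r => [|i r [B hB]].
  by exists 0 => w; rewrite big_nil Rabs_R0; lra.
case: (h i) => [B1 hB1]; exists (B1 + B) => w; rewrite big_cons.
apply: Rle_trans (Rabs_triang _ _) _; have := hB1 w; have := hB w; lra.
Qed.

Lemma E_zero (Omega : Type) (E : (Omega -> R) -> R) : is_expectation E -> E (fun _ => 0) = 0.
Proof.
move=> hE; have hb : bounded_rv (fun _ : Omega => 1) by exists 1 => w; rewrite Rabs_R1; lra.
have H := E_scale hE 0 hb; rewrite !Rmult_0_l in H; exact: H.
Qed.

Lemma E_sum (Omega I : Type) (E : (Omega -> R) -> R) (r : seq I) (F : I -> Omega -> R) :
  is_expectation E -> (forall i, bounded_rv (F i)) ->
  E (fun w => \big[Rplus/0]_(i <- r) F i w) = \big[Rplus/0]_(i <- r) E (F i).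
Proof.
move=> hE h; elim: r => [|i r IH].
  rewrite big_nil; apply: eq_trans (E_zero hE); congr E; apply: functional_extensionality => w; by rewrite big_nil.
rewrite big_cons -IH -(E_add hE (h i) (bounded_sum r h)); congr E.
by apply: functional_extensionality => w; rewrite big_cons.
Qed.

Fixpoint cost (s t : seq nat) : R :=
  match s, t with
  | x :: s', y :: t' => Rabs (INR x - INR y) + cost s' t'
  | _, _ => 0
  end.

Lemma cost_cat s1 s2 t1 t2 : size s1 = size t1 ->
  cost (s1 ++ s2) (t1 ++ t2) = cost s1 t1 + cost s2 t2.
Proof.
elim: s1 t1 => [|x s1 IH] [|y t1] //= => [_|]; first lra.
by case=> h; rewrite IH //; lra.
Qed.

Lemma four_point (a b c d : R) : a <= b -> c <= d ->
  Rabs (a - c) + Rabs (b - d) <= Rabs (a - d) + Rabs (b - c).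
Proof.
move=> h1 h2; unfold Rabs; repeat case: Rcase_abs; intros; lra.
Qed.

Lemma perm_swap (y c : nat) r1 r2 :
  perm_eq (y :: r1 ++ c :: r2) (c :: r1 ++ y :: r2).
Proof.
apply/seq.permP => P /=; rewrite !count_cat /=; lia.
Qed.

Lemma rearr (p q r : seq nat) : sorted leq p -> sorted leq q -> perm_eq q r ->
  size p = size q -> cost p q <= cost p r.
Proof.
elim: p q r => [|a p' IH] q r sp sq pqr hs; move: sq pqr hs.
  by by case: q r => [|? ?] [|? ?] //= _ _; lra.
case: q => [//|c q'] sq pqr [hs].
have hsr := perm_size pqr.
case: r pqr hsr => [//|y r'] pqr [hsr].
have sp' : sorted leq p' := path_sorted sp.
have sq' : sorted leq q' := path_sorted sq.
have allp : all (leq a) p' := order_path_min leq_trans sp.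
have allq : all (leq c) q' := order_path_min leq_trans sq.
case: (eqVneq y c) => [eyc | nyc].
  subst y; rewrite perm_cons in pqr; rewrite /=.
  have := IH _ _ sp' sq' pqr hs; lra.
have cr' : c \in r'.
  have : c \in y :: r' by rewrite -(perm_mem pqr) mem_head.
  by rewrite in_cons eq_sym (negPf nyc).
have yq' : y \in q'.
  have : y \in c :: q' by rewrite (perm_mem pqr) mem_head.
  by rewrite in_cons (negPf nyc).
have le_cy : (c <= y)%N by move/allP: allq => /(_ _ yq').
case/splitPr: cr' pqr hsr => r1 r2 pqr hsr.
have [p1 [b [p2 [ep hp1]]]] : exists p1 b p2, p' = p1 ++ b :: p2 /\ size p1 = size r1.
  exists (take (size r1) p'); case ed: (drop (size r1) p') => [|b p2].
    by move: (size_drop (size r1) p'); rewrite ed hs hsr size_cat /=; lia.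
  exists b, p2; split; first by rewrite -ed cat_take_drop.
  by rewrite size_take hs hsr; case: ltnP => //; rewrite size_cat /=; lia.
have bp : b \in p' by rewrite ep mem_cat mem_head orbT.
have le_ab : (a <= b)%N by move/allP: allp => /(_ _ bp).
have pq'' : perm_eq q' (r1 ++ y :: r2).
  by rewrite -(perm_cons c); apply: perm_trans pqr (perm_swap _ _ _ _).
have := IH _ _ sp' sq' pq'' hs.
rewrite ep /= !cost_cat //= .
have := @four_point (INR a) (INR b) (INR c) (INR y) (le_INR _ _ (elimT ssrnat.leP le_ab)) (le_INR _ _ (elimT ssrnat.leP le_cy)).
lra.
Qed.

Lemma cost_nth (s t : seq nat) : size s = size t ->
  \big[Rplus/0]_(a < size s) Rabs (INR (nth 0%N s a) - INR (nth 0%N t a)) = cost s t.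
Proof.
elim: s t => [|x s IH] [|y t] //= => [_|[h]]; first by rewrite big_ord0.
by rewrite big_ord_recl /= -IH.
Qed.

Lemma val_tnth n m (p : m.-tuple 'I_n) (a : 'I_m) : nat_of_ord (tnth p a) = nth 0%N (map val p) a.
Proof. by rewrite (nth_map (tnth p a)) ?size_tuple // -tnth_nth. Qed.

Lemma dist1_cost n m (p q : m.-tuple 'I_n) : dist1 p q = cost (map val p) (map val q).
Proof.
rewrite -cost_nth; last by rewrite !size_map !size_tuple.
rewrite size_map size_tuple /dist1; apply: eq_bigr => a _; by rewrite !val_tnth.
Qed.

Definition qs n m (q : m.-tuple 'I_n) (s : 'S_m) : m.-tuple 'I_n := [tuple tnth q (s a) | a < m].

Lemma qs_perm n m (q : m.-tuple 'I_n) s : perm_eq (qs q s) q.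
Proof. by apply/tuple_permP; exists s. Qed.

Lemma dist1_qs n m (p q : m.-tuple 'I_n) s : strictly_increasing p -> strictly_increasing q ->
  dist1 p q <= dist1 p (qs q s).
Proof.
move=> hp hq; rewrite /strictly_increasing in hp hq; rewrite !dist1_cost; apply: rearr.
- move: hp; apply: sub_sorted => x y; exact: ltnW.
- move: hq; apply: sub_sorted => x y; exact: ltnW.
- by apply: perm_map; rewrite perm_sym qs_perm.
- by rewrite !size_map !size_tuple.
Qed.

Lemma entry_le1 n (A : 'M[R]_n) i j : (A *m A^T = 1%:M)%R -> Rabs (A i j) <= 1.
Proof.
move=> h; have := congr1 (fun M : 'M[R]_n => M i i) h; rewrite !mxE eqxx /=.
under eq_bigr do rewrite mxE.
change (\big[Rplus/0]_k (A i k * A i k) = 1 -> Rabs (A i j) <= 1).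
rewrite (bigD1 j) //= => H.
have : 0 <= \big[Rplus/0]_(k | k != j) (A i k * A i k).
  by apply: sumR_ge0 => k _; nra.
move=> H2; change (A i j * A i j + \big[Rplus/0]_(k | k != j) (A i k * A i k) = 1) in H.
have : A i j * A i j <= 1 by lra.
unfold Rabs; case: Rcase_abs => _ ?; nra.
Qed.

Lemma det_bound m (M : 'M[R]_m) :
  Rabs ((\det M)%R) <= \big[Rplus/0]_(s : 'S_m) \big[Rmult/1]_(a < m) Rabs (M a (s a)).
Proof.
rewrite /determinant.
change (Rabs (\big[Rplus/0]_(s : 'S_m) (((-1) ^+ s) * \prod_i M i (s i))%R) <= \big[Rplus/0]_(s : 'S_m) \big[Rmult/1]_(a < m) Rabs (M a (s a))).
apply: Rle_trans; first exact: Rabs_sumR.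
apply: sumR_le => s _.
change (Rabs (((-1) ^+ s)%R * \big[Rmult/1]_i M i (s i)) <= \big[Rmult/1]_(a < m) Rabs (M a (s a))).
rewrite Rabs_mult Rabs_prodR.
have -> : Rabs ((-1) ^+ s)%R = 1.
  case: (odd_perm s) => /=; rewrite ?expr1 ?expr0; [change (Rabs (- 1) = 1); by rewrite Rabs_Ropp Rabs_R1 | exact: Rabs_R1].
rewrite Rmult_1_l; exact: Rle_refl.
Qed.

Lemma geo (x n : nat) (r : R) : 0 <= r <= 1 ->
  (\big[Rplus/0]_(k < n) r ^ ((x - k) + (k - x))) * (1 - r)
    <= r ^ (x.+1 - n) + 1 - r ^ (n - x).
Proof.
move=> hr; elim: n => [|n IH].
  rewrite big_ord0 /=; have := pow_le r x (proj1 hr); nra.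
rewrite (big_ord_recr n) /=.
set S := \big[Rplus/0]_(i < n) _ in IH *.
case: (ltngtP n x) => h.
- have e1 : (x - n + (n - x) = x - n)%N by lia.
  have e2 : (x.+1 - n = (x - n).+1)%N by lia.
  have e3 : (x.+1 - n.+1 = x - n)%N by lia.
  have e4 : (n - x = 0)%N by lia.
  have e5 : (n.+1 - x = 0)%N by lia.
  rewrite e1 e3 e5; rewrite e2 e4 /= in IH.
  set R' := r ^ (x - n) in IH *; lra.
- have e1 : (x - n + (n - x) = n - x)%N by lia.
  have e2 : (x.+1 - n = 0)%N by lia.
  have e3 : (x.+1 - n.+1 = 0)%N by lia.
  have e5 : (n.+1 - x = (n - x).+1)%N by lia.
  rewrite e1 e3 e5; rewrite e2 /= in IH.
  set R' := r ^ (n - x) in IH *; rewrite /= -/R'; nra.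
- subst n.
  have e1 : (x - x + (x - x) = 0)%N by lia.
  have e2 : (x.+1 - x = 1)%N by lia.
  have e3 : (x.+1 - x.+1 = 0)%N by lia.
  rewrite e1 e2 e3 /=; rewrite e2 subnn /= in IH; lra.
Qed.

Lemma exp_INR_pow (d : nat) (a : R) : exp (INR d * a) = exp a ^ d.
Proof.
elim: d => [|d IH]; first by rewrite /= Rmult_0_l exp_0.
rewrite S_INR Rmult_plus_distr_r Rmult_1_l exp_plus IH /=; ring.
Qed.

Lemma Rabs_INR_sub (x k : nat) : Rabs (INR x - INR k) = INR ((x - k) + (k - x))%N.
Proof.
case: (leqP k x) => h.
- have -> : (k - x = 0)%N by lia.
  rewrite addn0 minus_INR; last by apply/ssrnat.leP.
  rewrite Rabs_right //; have := le_INR k x (elimT ssrnat.leP h); lra.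
- have -> : (x - k = 0)%N by lia.
  rewrite add0n minus_INR; last by apply/ssrnat.leP; exact: ltnW.
  rewrite Rabs_left1 //; have := le_INR x k (elimT ssrnat.leP (ltnW h)); lra.
Qed.

Lemma pow_le1 (r : R) (k : nat) : 0 <= r <= 1 -> r ^ k <= 1.
Proof.
move=> hr; elim: k => [|k IH] /=; first lra.
have := pow_le r k (proj1 hr); nra.
Qed.

Lemma rowsum (c : R) (x n : nat) : 0 < c ->
  \big[Rplus/0]_(k < n) exp (- Rabs (INR x - INR k) / c) <= 2 * (c + 1).
Proof.
move=> hc.
set r := exp (- / c).
have e : forall k : 'I_n, exp (- Rabs (INR x - INR k) / c) = r ^ ((x - k) + (k - x)).
  move=> k; rewrite Rabs_INR_sub -exp_INR_pow; congr exp; rewrite /Rdiv; ring.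
rewrite (eq_bigr _ (fun k _ => e k)).
have r0 : 0 < r by apply: exp_pos.
have hu : 1 + / c < exp (/ c) by apply: exp_ineq1; apply: Rgt_not_eq; apply: Rinv_0_lt_compat.
have ru : r * exp (/ c) = 1 by rewrite /r -exp_plus Rplus_opp_l exp_0.
have ic : c * / c = 1 by field; lra.
have hic : 0 < / c by apply: Rinv_0_lt_compat.
have r1 : r <= 1 by nra.
have key : 1 <= (1 - r) * (c + 1) by nra.
have := geo x n (conj (Rlt_le _ _ r0) r1).
set S := \big[Rplus/0]_(k < n) _.
have := pow_le r (x.+1 - n) (Rlt_le _ _ r0).
have := pow_le r (n - x) (Rlt_le _ _ r0).
have := pow_le r (x.+1 - n) (Rlt_le _ _ r0).
have p1 : r ^ (x.+1 - n) <= 1 by apply: pow_le1; lra.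
have S0 : 0 <= S by apply: sumR_ge0 => k _; apply: pow_le; lra.
nra.
Qed.

Lemma perm_le_rows m (F : 'I_m -> 'I_m -> R) : (forall a b, 0 <= F a b) ->
  \big[Rplus/0]_(s : 'S_m) \big[Rmult/1]_(a < m) F a (s a)
    <= \big[Rmult/1]_(a < m) \big[Rplus/0]_(b < m) F a b.
Proof.
move=> hF; rewrite bigA_distr_bigA /=.
set phi := fun s : 'S_m => [ffun a => s a].
have -> : \big[Rplus/0]_(s : 'S_m) \big[Rmult/1]_(a < m) F a (s a)
   = \big[Rplus/0]_(f <- map phi (index_enum _)) \big[Rmult/1]_(a < m) F a (f a).
  rewrite big_map; apply: eq_bigr => s _; apply: eq_bigr => a _; by rewrite ffunE.
apply: sum_sub_uniq.
- rewrite map_inj_uniq ?index_enum_uniq // => s1 s2 h.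
  apply/permP => a; have := congr1 (fun f : {ffun 'I_m -> 'I_m} => f a) h; by rewrite !ffunE.
- by move=> f; apply: prodR_ge0.
Qed.

Lemma rowsum_tuple n m (q : m.-tuple 'I_n) (x : nat) (c : R) : uniq q -> 0 < c ->
  \big[Rplus/0]_(b < m) exp (- Rabs (INR x - INR (tnth q b)) / c) <= 2 * (c + 1).
Proof.
move=> uq hc.
rewrite -(big_tuple _ _ q predT (fun k : 'I_n => exp (- Rabs (INR x - INR k) / c))).
apply: Rle_trans (rowsum x n hc).
apply: sum_sub_uniq uq _ => k; apply: Rlt_le; apply: exp_pos.
Qed.

Lemma exp_le x y : x <= y -> exp x <= exp y.
Proof. case=> h; [apply: Rlt_le; exact: exp_increasing | rewrite h; lra]. Qed.

Lemma prod_const m (c : R) : \big[Rmult/1]_(a < m) c = c ^ m.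
Proof. elim: m => [|m IH]; first by rewrite big_ord0. by rewrite big_ord_recr IH /=; ring. Qed.

Lemma prod_le1 I (r : seq I) (F : I -> R) : (forall i, 0 <= F i <= 1) -> \big[Rmult/1]_(i <- r) F i <= 1.
Proof.
move=> h; suff : 0 <= \big[Rmult/1]_(i <- r) F i <= 1 by case.
apply: (big_ind (fun x => 0 <= x <= 1)); first lra.
- move=> x y [? ?] [? ?]; split; nra.
- by move=> i _; apply: h.
Qed.

Lemma prod_abs_qs n m (A : 'M[R]_n) (p q : m.-tuple 'I_n) (s : 'S_m) :
  prod_abs_entries A p (qs q s) = \big[Rmult/1]_(a < m) Rabs (A (tnth p a) (tnth q (s a))).
Proof. by apply: eq_bigr => a _; rewrite tnth_mktuple. Qed.

Lemma det_subm_bound n m (A : 'M[R]_n) (p q : m.-tuple 'I_n) :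
  Rabs ((\det (subm A p q))%R) <= \big[Rplus/0]_(s : 'S_m) prod_abs_entries A p (qs q s).
Proof.
apply: Rle_trans (det_bound _) _; apply: Req_le; apply: eq_bigr => s _.
rewrite prod_abs_qs; apply: eq_bigr => a _; by rewrite mxE.
Qed.

Lemma prod_abs_bounded n m (A : 'M[R]_n) (p q : m.-tuple 'I_n) : (A *m A^T = 1%:M)%R ->
  0 <= prod_abs_entries A p q <= 1.
Proof.
move=> h; split; first by apply: prodR_ge0 => a _; apply: Rabs_pos.
apply: prod_le1 => a; split; [apply: Rabs_pos | exact: entry_le1].
Qed.

Theorem mainTheorem11 :
  exists K kappa : R, 0 < K /\ 0 < kappa /\
  forall (Omega : Type) (E : (Omega -> R) -> R), is_expectation E ->
  forall (Rm : forall N : nat, Omega -> 'M[R]_(N.*2)),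
  (forall N w, is_SO (Rm N w)) ->
  forall ct xit : R, 0 < ct -> 1 <= xit ->
  (forall (N m : nat), (1 <= m)%N ->
     forall p q : m.-tuple 'I_(N.*2), uniq p -> uniq q ->
     INR N / 8 <= dist1 p q ->
     E (fun w => prod_abs_entries (Rm N w) p q)
       <= pow ct m * exp (- dist1 p q / xit)) ->
  let C := K * ct * xit ^ 2 in
  let xi := kappa * xit in
  exists N0 : nat, forall N : nat, (N0 <= N)%N ->
  forall m : nat, (1 <= m)%N ->
  forall p q : m.-tuple 'I_(N.*2),
     strictly_increasing p -> strictly_increasing q ->
     INR N / 8 <= dist1 p q ->
     E (fun w => Rabs (determinant (subm (Rm N w) p q)))
       <= pow C m * exp (- INR N / xi).
Proof.
exists 6, 16; split; first lra; split; first lra.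
move=> Omega E hE Rm hSO ct xit hct hxit hyp C xi; exists 0%N => N _ m hm p q hp hq hd.
rewrite /C /xi.
set T := fun (s : 'S_m) w => prod_abs_entries (Rm N w) p (qs q s).
have Tb : forall s w, 0 <= T s w <= 1.
  by move=> s w; apply: prod_abs_bounded; case: (hSO N w).
have Tbd : forall s, bounded_rv (T s).
  by move=> s; exists 1 => w; have [h1 h2] := Tb s w; rewrite Rabs_right; lra.
have [B hB] := bounded_sum (index_enum 'S_m) Tbd.
have pw : forall w, Rabs (determinant (subm (Rm N w) p q)) <= \big[Rplus/0]_(s <- index_enum 'S_m) T s w.
  by move=> w; apply: det_subm_bound.
have step1 : E (fun w => Rabs (determinant (subm (Rm N w) p q)))
    <= \big[Rplus/0]_(s <- index_enum 'S_m) E (T s).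
  rewrite -(E_sum _ hE Tbd); apply: (E_mono hE).
  - exists B => w; rewrite Rabs_Rabsolu; apply: Rle_trans (pw w) _.
    apply: Rle_trans (Rle_abs _) _; exact: hB.
  - exact: bounded_sum.
  - exact: pw.
apply: Rle_trans step1 _.
have up : uniq p.
  have : uniq (map val p).
    by apply: (sorted_uniq ltn_trans ltnn); exact: hp.
  by rewrite map_inj_uniq //; exact: val_inj.
have uq : uniq q.
  have : uniq (map val q).
    by apply: (sorted_uniq ltn_trans ltnn); exact: hq.
  by rewrite map_inj_uniq //; exact: val_inj.
set c := 2 * xit.
have hc : 0 < c by rewrite /c; lra.
set g := fun (a b : 'I_m) => exp (- Rabs (INR (tnth p a) - INR (tnth q b)) / c).
have g0 : forall a b, 0 <= g a b by move=> a b; apply: Rlt_le; apply: exp_pos.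
set e0 := exp (- INR N / (16 * xit)).
have step2 : forall s, E (T s) <= ct ^ m * e0 * \big[Rmult/1]_(a < m) g a (s a).
  move=> s.
  have hds : INR N / 8 <= dist1 p (qs q s).
    apply: Rle_trans hd _; exact: dist1_qs.
  apply: Rle_trans (hyp N m hm p (qs q s) up _ hds) _.
    by rewrite (perm_uniq (qs_perm q s)).
  rewrite Rmult_assoc; apply: Rmult_le_compat_l; first by apply: pow_le; lra.
  set D := dist1 p (qs q s).
  have eD : exp (- D / xit) = exp (- D / c) * exp (- D / c).
    by rewrite -exp_plus; congr exp; rewrite /c; field; lra.
  have eP : exp (- D / c) = \big[Rmult/1]_(a < m) g a (s a).
    rewrite /D /dist1.
    rewrite (big_morph (fun x => exp (- x / c)) (id1 := 1) (op1 := Rmult)).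
    - by apply: eq_bigr => a _; rewrite /g tnth_mktuple.
    - by move=> x y; rewrite -exp_plus; congr exp; rewrite /Rdiv; ring.
    - by rewrite /Rdiv Ropp_0 Rmult_0_l exp_0.
  rewrite eD eP; apply: Rmult_le_compat_r.
    by apply: prodR_ge0 => a _.
  rewrite -eP /e0; apply: exp_le.
  rewrite /c; apply: (Rle_trans _ (- (INR N / 8) / (2 * xit))).
    rewrite /Rdiv; apply: Rmult_le_compat_r.
      by apply: Rlt_le; apply: Rinv_0_lt_compat; lra.
    rewrite /D; lra.
  by apply: Req_le; field; lra.
apply: Rle_trans; first by apply: sumR_le => s _; exact: step2.
rewrite -big_distrr /=.
have hperm := perm_le_rows g0.
have hrow : \big[Rmult/1]_(a < m) \big[Rplus/0]_(b < m) g a b <= (6 * xit) ^ m.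
  rewrite -prod_const; apply: prodR_le => a _; split.
    by apply: sumR_ge0 => b _.
  apply: Rle_trans (rowsum_tuple (tnth p a) uq hc) _; rewrite /c; lra.
have e0p : 0 < e0 by apply: exp_pos.
have ctp : 0 <= ct ^ m by apply: pow_le; lra.
have hx : (6 * xit) ^ m <= (6 * xit ^ 2) ^ m.
  apply: pow_incr; split; [lra|]; rewrite /= Rmult_1_r; nra.
have S0 : 0 <= \big[Rplus/0]_(s <- index_enum 'S_m) \big[Rmult/1]_(a < m) g a (s a).
  by apply: sumR_ge0 => s _; apply: prodR_ge0.
have Q : \big[Rplus/0]_(s <- index_enum 'S_m) \big[Rmult/1]_(a < m) g a (s a) <= (6 * xit ^ 2) ^ m.
  apply: Rle_trans hperm _; lra.
rewrite Rpow_mult_distr /=.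
have -> : (6 * ct) ^ m * (xit * (xit * 1)) ^ m = ct ^ m * (6 * xit ^ 2) ^ m.
  by rewrite -!Rpow_mult_distr; f_equal; ring.
have ce : 0 <= ct ^ m * e0 by nra.
set S := \big[Rplus/0]_(s <- index_enum 'S_m) _ in S0 Q *.
set X := (6 * xit ^ 2) ^ m in Q *.
nra.
Qed.
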